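(* For any compilation chain for partial programs and any trace relation ${\sim}\subseteq\mathit{Trace}_S\times\mathit{Trace}_T$ with existential and universal images $\tilde\tau,\tilde\sigma$ (lifted to hyperproperties), $\mathit{RHC}^{\sim}$ is equivalent to $\mathit{RHP}^{\tilde\tau}$. Moreover, if $\tilde\tau\circ\tilde\sigma=\mathrm{id}$ (a Galois insertion), then $\mathit{RHC}^{\sim}$ implies $\mathit{RHP}^{\tilde\sigma}$; and if $\tilde\sigma\circ\tilde\tau=\mathrm{id}$ (a Galois reflection), then $\mathit{RHP}^{\tilde\sigma}$ implies $\mathit{RHC}^{\sim}$. Here $\mathit{RHC}^{\sim}\equiv\forall P\ \forall C_T\ \exists C_S\ \forall t.\ C_T[P{\downarrow}]\rightsquigarrow t\iff(\exists s\sim t.\ C_S[P]\rightsquigarrow s)$; $\mathit{RHP}^{\tilde\tau}\equiv\forall P\ \forall H_S.\ P\models_R H_S\Rightarrow P{\downarrow}\models_R\tilde\tau(H_S)$; $\mathit{RHP}^{\tilde\sigma}\equiv\forall P\ \forall H_T.\ P\models_R\tilde\sigma(H_T)\Rightarrow P{\downarrow}\models_R H_T$.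
   Context: A compilation chain for partial programs consists of source partial programs $P$ and source contexts $C_S$, target partial programs and target contexts $C_T$, linking $C[P]$ into whole programs, sets $\mathit{Trace}_S,\mathit{Trace}_T$ of traces, semantics relations $W\rightsquigarrow t$ for whole programs, and a compiler $P\mapsto P{\downarrow}$. $\mathit{beh}(W)=\{t\mid W\rightsquigarrow t\}$. A hyperproperty is a set of sets of traces; $P\models_R H$ iff for every context $C$ at the same level, $\mathit{beh}(C[P])\in H$. The existential image of $\sim$ is $\tilde\tau(\pi)=\{t\mid\exists s.\ s\sim t\wedge s\in\pi\}$ and its universal image is $\tilde\sigma(\pi)=\{s\mid\forall t.\ s\sim t\Rightarrow t\in\pi\}$; on hyperproperties, $\tilde\tau(H_S)=\{\tilde\tau(\pi)\mid\pi\in H_S\}$ and $\tilde\sigma(H_T)=\{\tilde\sigma(\pi)\mid\pi\in H_T\}$. The identities $\tilde\tau\circ\tilde\sigma=\mathrm{id}$, $\tilde\sigma\circ\tilde\tau=\mathrm{id}$ refer to the maps on trace properties. *)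

(* Defs.v *)
Set Implicit Arguments.

Record chain : Type := {
  progS : Type;
  ctxS : Type;
  progT : Type;
  ctxT : Type;
  wholeS : Type;
  wholeT : Type;
  traceS : Type;
  traceT : Type;
  plugS : ctxS -> progS -> wholeS;
  plugT : ctxT -> progT -> wholeT;
  semS : wholeS -> traceS -> Prop;
  semT : wholeT -> traceT -> Prop;
  compile : progS -> progT
}.

Definition prop (T : Type) := T -> Prop.
Definition hprop (T : Type) := prop T -> Prop.

Section Chain.
Variable L : chain.

Definition behS (W : wholeS L) : prop (traceS L) := fun s => semS L W s.
Definition behT (W : wholeT L) : prop (traceT L) := fun t => semT L W t.

Definition rsatS (P : progS L) (H : hprop (traceS L)) : Prop :=
  forall C : ctxS L, H (behS (plugS L C P)).
Definition rsatT (P : progT L) (H : hprop (traceT L)) : Prop :=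
  forall C : ctxT L, H (behT (plugT L C P)).

Variable rel : traceS L -> traceT L -> Prop.

Definition tau_img (pi : prop (traceS L)) : prop (traceT L) :=
  fun t => exists s, rel s t /\ pi s.
Definition sigma_img (pi : prop (traceT L)) : prop (traceS L) :=
  fun s => forall t, rel s t -> pi t.

Definition tau_himg (H : hprop (traceS L)) : hprop (traceT L) :=
  fun pi' => exists pi, H pi /\ pi' = tau_img pi.
Definition sigma_himg (H : hprop (traceT L)) : hprop (traceS L) :=
  fun pi' => exists pi, H pi /\ pi' = sigma_img pi.

Definition RHC : Prop :=
  forall (P : progS L) (CT : ctxT L), exists CS : ctxS L, forall t : traceT L,
    semT L (plugT L CT (compile L P)) t <->
    (exists s, rel s t /\ semS L (plugS L CS P) s).

Definition RHP_tau : Prop :=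
  forall (P : progS L) (HS : hprop (traceS L)),
    rsatS P HS -> rsatT (compile L P) (tau_himg HS).

Definition RHP_sigma : Prop :=
  forall (P : progS L) (HT : hprop (traceT L)),
    rsatS P (sigma_himg HT) -> rsatT (compile L P) HT.

End Chain.

(* Main.v *)
Require Import Defs.
From Stdlib Require Import FunctionalExtensionality PropExtensionality.

Lemma pext {T} (p q : T -> Prop) : (forall x, p x <-> q x) -> p = q.
Proof. intro H; apply functional_extensionality; intro x; apply propositional_extensionality; auto. Qed.

Theorem theorem5p3 (L : chain) (rel : traceS L -> traceT L -> Prop) :
  (@RHC L rel <-> @RHP_tau L rel) /\
  ((forall pi : prop (traceT L), @tau_img L rel (@sigma_img L rel pi) = pi) ->
     @RHC L rel -> @RHP_sigma L rel) /\
  ((forall pi : prop (traceS L), @sigma_img L rel (@tau_img L rel pi) = pi) ->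
     @RHP_sigma L rel -> @RHC L rel).
Proof.
  split; [split|split].
  - intros HR P HS Hs CT. destruct (HR P CT) as [CS HC].
    exists (behS L (plugS L CS P)). split; [apply Hs|].
    apply pext; intro t; apply HC.
  - intros HR P CT.
    assert (Hs : rsatS L P (fun pi => exists CS, pi = behS L (plugS L CS P)))
      by (intro CS; exists CS; reflexivity).
    destruct (HR P _ Hs CT) as [pi [[CS ->] Heq]].
    exists CS; intro t. change (behT L (plugT L CT (compile L P)) t <-> tau_img L rel (behS L (plugS L CS P)) t).
    rewrite <- Heq; tauto.
  - intros Hid HR P HT Hs CT. destruct (HR P CT) as [CS HC].
    destruct (Hs CS) as [pi [Hpi Heq]].
    replace (behT L (plugT L CT (compile L P))) with pi; [exact Hpi|].
    rewrite <- (Hid pi), <- Heq. apply pext; intro t; symmetry; apply HC.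
  - intros Hid HR P CT.
    assert (Hs : rsatS L P (sigma_himg L rel (fun pi => exists CS, pi = tau_img L rel (behS L (plugS L CS P))))).
    { intro CS. exists (tau_img L rel (behS L (plugS L CS P))). split.
      - exists CS; reflexivity.
      - symmetry; apply Hid. }
    destruct (HR P _ Hs CT) as [CS Heq].
    exists CS; intro t. change (behT L (plugT L CT (compile L P)) t <-> tau_img L rel (behS L (plugS L CS P)) t).
    rewrite <- Heq; tauto.
Qed.
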